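(* Let $(S,T_1,*,\equiv',1',\sigma_1',\bar\sigma_1')$ be a link model. Then there is a well-defined map $f:B_\infty\to S$ satisfying $f(1)=1'$, $f(\sigma_i)=T_1^{i-1}(\sigma_1')$ for all $i\in\mathbb{N}$ (with $T_1^0$ the identity), and $f(b_1\cdot b_2)=f(b_1)*f(b_2)$ for all $b_1,b_2\in B_\infty$.
   Context: Consider a first-order language with signature $(\cdot,T,\equiv,1,\sigma,\bar\sigma)$: $\cdot$ binary function, $T$ unary function, $\equiv$ binary predicate, constants $1,\sigma,\bar\sigma$. The link axioms are: $\forall x,y,z\ x\cdot(y\cdot z)=(x\cdot y)\cdot z$; $\forall x\ 1\cdot x=x$; $\forall x\ x\cdot 1=x$; $\sigma\cdot\bar\sigma=\bar\sigma\cdot\sigma=1$; $\forall x,y\ T(x\cdot y)=T(x)\cdot T(y)$; $T(1)=1$; $\sigma\cdot T(\sigma)\cdot\sigma=T(\sigma)\cdot\sigma\cdot T(\sigma)$; $\forall b\ \sigma\cdot T(T(b))=T(T(b))\cdot\sigma$; $\equiv$ is reflexive, symmetric and transitive; $\forall x,y,z\ (y\cdot z=1\to x\equiv y\cdot x\cdot z)$; $\forall x\ x\equiv\sigma\cdot T(x)$; $\forall x\ x\equiv\bar\sigma\cdot T(x)$. A link model is a structure satisfying these axioms; in $(S,T_1,*,\equiv',1',\sigma_1',\bar\sigma_1')$ the symbols $\cdot,T,\equiv,1,\sigma,\bar\sigma$ are interpreted by $*,T_1,\equiv',1',\sigma_1',\bar\sigma_1'$. $B_\infty$ is the group generated by $\{\sigma_i\}_{i\in\mathbb{N}}$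 with relations $\sigma_i\sigma_j=\sigma_j\sigma_i$ for $i\ge j+2$ and $\sigma_i\sigma_{i+1}\sigma_i=\sigma_{i+1}\sigma_i\sigma_{i+1}$. *)

(* Defs.v *)
From Stdlib Require Import List.
Import ListNotations.

Record is_link_model {S : Type} (mul : S -> S -> S) (T : S -> S)
    (eqv : S -> S -> Prop) (one sig sigb : S) : Prop := {
  lm_assoc : forall x y z, mul x (mul y z) = mul (mul x y) z;
  lm_one_l : forall x, mul one x = x;
  lm_one_r : forall x, mul x one = x;
  lm_sig_inv_r : mul sig sigb = one;
  lm_sig_inv_l : mul sigb sig = one;
  lm_T_mul : forall x y, T (mul x y) = mul (T x) (T y);
  lm_T_one : T one = one;
  lm_braid : mul (mul sig (T sig)) sig = mul (mul (T sig) sig) (T sig);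
  lm_far : forall b, mul sig (T (T b)) = mul (T (T b)) sig;
  lm_eqv_refl : forall x, eqv x x;
  lm_eqv_sym : forall x y, eqv x y -> eqv y x;
  lm_eqv_trans : forall x y z, eqv x y -> eqv y z -> eqv x z;
  lm_conj : forall x y z, mul y z = one -> eqv x (mul (mul y x) z);
  lm_stab : forall x, eqv x (mul sig (T x));
  lm_stab_bar : forall x, eqv x (mul sigb (T x))
}.

(** The braid group B_infinity, presented by generators and relations:
    words in letters sigma_i^{+1} / sigma_i^{-1}, modulo the congruence
    generated by free cancellation and the braid relations.
    Convention: [Gen i true] is sigma_{i+1}, [Gen i false] its inverse
    (paper's generators sigma_1, sigma_2, ... ; 0-based here). *)
Inductive letter : Type := Gen (i : nat) (positive : bool).

Definition inv_letter (l : letter) : letter :=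
  match l with Gen i b => Gen i (negb b) end.

Definition word := list letter.

Definition sg (i : nat) : letter := Gen i true.

Inductive braid_rel : word -> word -> Prop :=
  | br_cancel : forall l, braid_rel [l; inv_letter l] []
  | br_far : forall i j, j + 2 <= i -> braid_rel [sg i; sg j] [sg j; sg i]
  | br_braid : forall i,
      braid_rel [sg i; sg (S i); sg i] [sg (S i); sg i; sg (S i)].

Inductive braid_eq : word -> word -> Prop :=
  | be_rel : forall u v w1 w2, braid_rel w1 w2 ->
      braid_eq (u ++ w1 ++ v) (u ++ w2 ++ v)
  | be_refl : forall w, braid_eq w w
  | be_sym : forall w1 w2, braid_eq w1 w2 -> braid_eq w2 w1
  | be_trans : forall w1 w2 w3, braid_eq w1 w2 -> braid_eq w2 w3 -> braid_eq w1 w3.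

(* Main.v *)
Require Import Defs.
From Stdlib Require Import List Lia Arith.
Import ListNotations.

Section Aux.
Variables (S : Type) (mul : S -> S -> S) (T : S -> S)
    (eqv : S -> S -> Prop) (one sig sigb : S).
Hypothesis H : is_link_model mul T eqv one sig sigb.

Definition lv (l : letter) : S :=
  match l with Gen i true => Nat.iter i T sig | Gen i false => Nat.iter i T sigb end.
Definition fw (w : word) : S := fold_right (fun l acc => mul (lv l) acc) one w.

Lemma iter_mul n x y : Nat.iter n T (mul x y) = mul (Nat.iter n T x) (Nat.iter n T y).
Proof. induction n; simpl; auto. rewrite IHn. apply (lm_T_mul _ _ _ _ _ _ H). Qed.
Lemma iter_one n : Nat.iter n T one = one.
Proof. induction n; simpl; auto. rewrite IHn. apply (lm_T_one _ _ _ _ _ _ H). Qed.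
Lemma iter_add a b x : Nat.iter (a + b) T x = Nat.iter b T (Nat.iter a T x).
Proof. induction b; simpl. rewrite Nat.add_0_r; auto. rewrite Nat.add_succ_r; simpl. now rewrite IHb. Qed.

Lemma iter_comm i x : T (Nat.iter i T x) = Nat.iter i T (T x).
Proof. induction i; simpl; congruence. Qed.

Lemma fw_app w1 w2 : fw (w1 ++ w2) = mul (fw w1) (fw w2).
Proof.
  induction w1; simpl. now rewrite (lm_one_l _ _ _ _ _ _ H).
  rewrite IHw1. apply (lm_assoc _ _ _ _ _ _ H).
Qed.

Lemma rel_ok w1 w2 : braid_rel w1 w2 -> fw w1 = fw w2.
Proof.
  destruct H as [A L R Si Sl Tm T1 Br Fa _ _ _ _ _ _].
  intros Hr; destruct Hr; simpl.
  - destruct l as [i []]; simpl; rewrite !R, <- iter_mul, ?Si, ?Sl; apply iter_one.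
  - unfold sg; simpl. rewrite !R.
    replace i with ((i - j - 2) + 2 + j) by lia.
    rewrite !iter_add, <- !iter_mul. f_equal. simpl. symmetry; apply Fa.
  - unfold sg; simpl. rewrite !R, !A, !iter_comm, <- !iter_mul. f_equal. apply Br.
Qed.
End Aux.

Theorem lemma6p3 (S : Type) (mul : S -> S -> S) (T : S -> S)
    (eqv : S -> S -> Prop) (one sig sigb : S) :
  is_link_model mul T eqv one sig sigb ->
  exists f : word -> S,
    (forall w1 w2, braid_eq w1 w2 -> f w1 = f w2) /\
    f [] = one /\
    (forall i : nat, f [sg i] = Nat.iter i T sig) /\
    (forall w1 w2, f (w1 ++ w2) = mul (f w1) (f w2)).
Proof.
  intros H. exists (fw S mul T one sig sigb). split; [|split; [|split]].
  - intros w1 w2 E; induction E; try congruence.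
    rewrite !(fw_app _ _ _ _ _ _ _ H). f_equal. f_equal.
    eapply rel_ok; eauto.
  - reflexivity.
  - intros i; simpl. apply (lm_one_r _ _ _ _ _ _ H).
  - apply (fw_app _ _ _ _ _ _ _ H).
Qed.
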